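(* Let $F$ be a field of characteristic $0$, $D$ a simply laced diagram on vertices $v_1,\dots,v_n$, and $\mathfrak k=\mathfrak k(D)$ with Berman generators $X_1,\dots,X_n$. Suppose $v_i\neq v_j$ are vertices such that every vertex $v_r\notin\{v_i,v_j\}$ is adjacent to $v_i$ if and only if it is adjacent to $v_j$. (a) If $v_i,v_j$ are not adjacent, let $D'$ be obtained from $D$ by deleting $v_j$, and let $X'_r$ ($r\neq j$) be the Berman generators of $\mathfrak k':=\mathfrak k(D')$. Then there is a well-defined surjective Lie algebra homomorphism $\varphi:\mathfrak k\to\mathfrak k'$ with $\varphi(X_r)=X'_r$ for $r\ne j$ and $\varphi(X_j)=X'_i$. (b) If $v_i,v_j$ are adjacent, let $D'$ be obtained from $D$ by deleting all edges at $v_j$ except the edge $\{v_i,v_j\}$, and let $X'_1,\dots,X'_n$ be the Berman generators of $\mathfrak k':=\mathfrak k(D')$. Then there is a well-defined surjective Lie algebra homomorphism $\varphi:\mathfrak k\to\mathfrak k'$ with $\varphi(X_r)=X'_r$ for $r\neq j$ and $\varphi(X_j)=[X'_i,X'_j]$.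
   Context: For a simply laced diagram (finite simple graph) $D$ on vertices $v_1,\dots,v_n$, $\mathfrak k(D)$ denotes the maximal compact subalgebra (fixed points of the Cartan--Chevalley involution $e_i\mapsto -f_i$, $f_i\mapsto -e_i$, $h_i\mapsto -h_i$) of the Kac--Moody algebra over $F$ whose generalized Cartan matrix has $a_{ii}=2$ and $a_{ij}=-1$ or $0$ according as $v_i,v_j$ are adjacent or not. By Berman's theorem, $\mathfrak k(D)$ is the Lie algebra with generators $X_1,\dots,X_n$ (the Berman generators, $X_i=e_i-f_i$) and defining relations $[X_a,[X_a,X_b]]=-X_b$ if $v_a,v_b$ are adjacent, $[X_a,X_b]=0$ if $a\ne b$ are non-adjacent. *)

(* Defs.v *)
From HB Require Import structures.
From mathcomp Require Import all_boot all_order all_algebra.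
Set Implicit Arguments. Unset Strict Implicit. Unset Printing Implicit Defensive.
Import GRing.Theory.
Local Open Scope ring_scope.

Definition is_lie (F : fieldType) (L : lmodType F) (br : L -> L -> L) : Prop :=
  [/\ (forall (a : F) (x y z : L), br (a *: x + y) z = a *: br x z + br y z),
      (forall (a : F) (x y z : L), br z (a *: x + y) = a *: br z x + br z y),
      (forall x : L, br x x = 0) &
      (forall x y z : L, br x (br y z) + br y (br z x) + br z (br x y) = 0)].

Definition is_lie_hom (F : fieldType) (L M : lmodType F)
    (brL : L -> L -> L) (brM : M -> M -> M) (f : L -> M) : Prop :=
  [/\ (forall (a : F) (x y : L), f (a *: x + y) = a *: f x + f y) &
      (forall x y : L, f (brL x y) = brM (f x) (f y))].

(* A simply laced diagram on vertices 'I_n: a simple graph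
   (symmetric irreflexive adjacency relation). *)
Definition simple_graph (n : nat) (adj : rel 'I_n) : Prop :=
  (forall a b, adj a b = adj b a) /\ (forall a, ~~ adj a a).

Definition berman_rel (F : fieldType) (n : nat) (adj : rel 'I_n)
    (L : lmodType F) (br : L -> L -> L) (X : 'I_n -> L) : Prop :=
  (forall a b, adj a b -> br (X a) (br (X a) (X b)) = - X b) /\
  (forall a b, a != b -> ~~ adj a b -> br (X a) (X b) = 0).

Definition lie_generated (F : fieldType) (n : nat)
    (L : lmodType F) (br : L -> L -> L) (X : 'I_n -> L) : Prop :=
  forall S : L -> Prop,
    S 0 ->
    (forall (a : F) x y, S x -> S y -> S (a *: x + y)) ->
    (forall x y, S x -> S y -> S (br x y)) ->
    (forall a, S (X a)) ->
    forall x, S x.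

(* (L, br, X) is the Lie algebra k(D) with Berman generators X, i.e. the
   Lie algebra presented by generators X_1..X_n and the Berman relations
   (Berman's theorem): it is generated by the X a, satisfies the relations,
   and is universal among Lie algebras with elements satisfying them. *)
Definition is_k_of (F : fieldType) (n : nat) (adj : rel 'I_n)
    (L : lmodType F) (br : L -> L -> L) (X : 'I_n -> L) : Prop :=
  [/\ is_lie br, berman_rel adj br X, lie_generated br X &
      forall (M : lmodType F) (brM : M -> M -> M) (Y : 'I_n -> M),
        is_lie brM -> berman_rel adj brM Y ->
        exists f : L -> M, is_lie_hom br brM f /\ forall a, f (X a) = Y a].

(* D' for part (a): delete vertex j; vertices 'I_n.-1, vertex k <-> lift j k. *)
Definition delete_vertex (n : nat) (adj : rel 'I_n) (j : 'I_n) : rel 'I_n.-1 :=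
  fun k l => adj (lift j k) (lift j l).

Definition keep_only_edge (n : nat) (adj : rel 'I_n) (i j : 'I_n) : rel 'I_n :=
  fun r s =>
    if (r == j) || (s == j) then
      adj r s && (((r == i) && (s == j)) || ((r == j) && (s == i)))
    else adj r s.

(* Main.v *)
Require Import Defs.
From HB Require Import structures.
From mathcomp Require Import all_boot all_order all_algebra.
Set Implicit Arguments. Unset Strict Implicit.
Import GRing.Theory.
Local Open Scope ring_scope.

Section Lie.
Lemma br0l (F : fieldType) (L : lmodType F) (br : L -> L -> L) (hL : is_lie br) z :
  br 0 z = 0.
Proof.
case: hL => hl _ _ _.
have := hl (-1) 0 0 z; rewrite scaler0 addr0 => ->.
by rewrite scaleN1r addNr.
Qed.

Lemma br0r (F : fieldType) (L : lmodType F) (br : L -> L -> L) (hL : is_lie br) z :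
  br z 0 = 0.
Proof.
case: hL => _ hr _ _.
have := hr (-1) 0 0 z; rewrite scaler0 addr0 => ->.
by rewrite scaleN1r addNr.
Qed.

Lemma brDl (F : fieldType) (L : lmodType F) (br : L -> L -> L) (hL : is_lie br) x y z :
  br (x + y) z = br x z + br y z.
Proof. case: hL => hl _ _ _. by have := hl 1 x y z; rewrite !scale1r. Qed.

Lemma brDr (F : fieldType) (L : lmodType F) (br : L -> L -> L) (hL : is_lie br) x y z :
  br z (x + y) = br z x + br z y.
Proof. case: hL => _ hr _ _. by have := hr 1 x y z; rewrite !scale1r. Qed.

Lemma brNl (F : fieldType) (L : lmodType F) (br : L -> L -> L) (hL : is_lie br) x z :
  br (- x) z = - br x z.
Proof.
have hl := hL; case: hL => hl' _ _ _.
by have := hl' (-1) x 0 z; rewrite !addr0 (br0l hl) addr0 !scaleN1r.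
Qed.

Lemma brNr (F : fieldType) (L : lmodType F) (br : L -> L -> L) (hL : is_lie br) x z :
  br z (- x) = - br z x.
Proof.
have hl := hL; case: hL => _ hr' _ _.
by have := hr' (-1) x 0 z; rewrite !addr0 (br0r hl) addr0 !scaleN1r.
Qed.

Lemma brC (F : fieldType) (L : lmodType F) (br : L -> L -> L) (hL : is_lie br) x y :
  br x y = - br y x.
Proof.
have h := hL; case: hL => _ _ ha _.
have := ha (x + y).
rewrite (brDl h) !(brDr h) !ha add0r addr0 => /eqP.
by rewrite addr_eq0 => /eqP.
Qed.

Lemma brJ (F : fieldType) (L : lmodType F) (br : L -> L -> L) (hL : is_lie br) x y z :
  br x (br y z) = br (br x y) z + br y (br x z).
Proof.
have h := hL; case: hL => _ _ _ hj.
have := hj x y z => /eqP; rewrite -addrA addr_eq0 => /eqP ->.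
rewrite opprD (brC h y (br z x)) opprK (brC h (br z x) y) (brC h z x) (brNr h) opprK.
by rewrite (brC h z (br x y)) opprK addrC.
Qed.
End Lie.

Lemma hom0 (F : fieldType) (L M : lmodType F) brL brM (f : L -> M)
  (hf : is_lie_hom brL brM f) : f 0 = 0.
Proof.
case: hf => hl _. have := hl (-1) 0 0.
by rewrite scaler0 addr0 => ->; rewrite scaleN1r addNr.
Qed.

Lemma two_neq0 (F : fieldType) (hF : [pchar F] =i pred0) : (2%:R : F) != 0.
Proof. by have := hF 2; rewrite !inE /= => ->. Qed.

Lemma double0 (F : fieldType) (hF : [pchar F] =i pred0) (L : lmodType F) (v : L) :
  v + v = 0 -> v = 0.
Proof.
move=> h.
have : (2%:R : F) *: v = 0 by rewrite scaler_nat mulr2n.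
move=> /eqP; rewrite scaler_eq0 (negbTE (two_neq0 hF)) /= => /eqP //.
Qed.

Lemma keyC (F : fieldType) (hF : [pchar F] =i pred0) (L : lmodType F) (br : L -> L -> L)
  (h : is_lie br) (A B C : L) :
  br A (br A B) = - B -> br B (br B A) = - A ->
  br A (br A C) = - C -> br B C = 0 ->
  br (br A B) (br (br A B) C) = - C.
Proof.
move=> hAB hBA hAC hBC.
have hZB : br (br A B) B = - A.
  by rewrite (brC h) (brC h A B) (brNr h) opprK hBA.
have hZW : br (br A B) (br A C) = 0.
  apply: (double0 hF).
  have e1 : br A (br B C) = br (br A B) C + br B (br A C) by rewrite (brJ h).
  have e2 : br A (br A (br B C)) = 0 by rewrite hBC (br0r h) (br0r h).
  rewrite e1 (brDr h) (brJ h A (br A B) C) (brJ h A B (br A C)) hAB hAC in e2.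
  by rewrite (brNl h) (brNr h) hBC oppr0 add0r addr0 in e2.
have hZC : br (br A B) C = - br B (br A C).
  have e := brJ h A B C. rewrite hBC (br0r h) in e.
  by apply/eqP; rewrite -addr_eq0 -e.
rewrite hZC (brNr h) (brJ h (br A B) B) hZB hZW (br0r h) addr0 (brNl h) opprK.
exact: hAC.
Qed.

Lemma keyC2 (F : fieldType) (L : lmodType F) (br : L -> L -> L)
  (h : is_lie br) (A B C : L) :
  br C (br C A) = - A -> br B C = 0 ->
  br C (br C (br A B)) = - br A B.
Proof.
move=> hCA hBC.
have hCB : br C B = 0 by rewrite (brC h) hBC oppr0.
rewrite (brJ h C A B) hCB (br0r h) addr0 (brJ h) hCA hCB (br0r h) addr0.
by rewrite (brNl h).
Qed.

Lemma keyC3 (F : fieldType) (L : lmodType F) (br : L -> L -> L)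
  (h : is_lie br) (A B C : L) :
  br A C = 0 -> br B C = 0 -> br (br A B) C = 0.
Proof.
move=> hAC hBC.
have e := brJ h A B C.
rewrite hBC (br0r h) hAC (br0r h) addr0 in e. by rewrite -e.
Qed.

Theorem mainTheorem4 (F : fieldType) (hF : [pchar F] =i pred0)
    (n : nat) (adj : rel 'I_n) (hD : simple_graph adj)
    (i j : 'I_n) (hij : i != j)
    (htwin : forall r : 'I_n, r != i -> r != j -> adj r i = adj r j)
    (L : lmodType F) (br : L -> L -> L) (X : 'I_n -> L)
    (hk : is_k_of adj br X) :
  (* (a) *)
  (~~ adj i j ->
   forall (L' : lmodType F) (br' : L' -> L' -> L') (X' : 'I_n.-1 -> L'),
     is_k_of (delete_vertex adj j) br' X' ->
     exists phi : L -> L',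
       [/\ is_lie_hom br br' phi,
           (forall y : L', exists x : L, phi x = y),
           (forall k : 'I_n.-1, phi (X (lift j k)) = X' k) &
           (forall k : 'I_n.-1, lift j k = i -> phi (X j) = X' k)]) /\
  (* (b) *)
  (adj i j ->
   forall (L' : lmodType F) (br' : L' -> L' -> L') (X' : 'I_n -> L'),
     is_k_of (keep_only_edge adj i j) br' X' ->
     exists phi : L -> L',
       [/\ is_lie_hom br br' phi,
           (forall y : L', exists x : L, phi x = y),
           (forall r : 'I_n, r != j -> phi (X r) = X' r) &
           phi (X j) = br' (X' i) (X' j)]).
Proof.
case: hD => hsym hirr.
case: hk => hL hB hG hU.
have tw : forall r, r != i -> r != j -> adj i r = adj j r.
  by move=> r ri rj; rewrite hsym htwin // hsym.
split.
- move=> nij L' br' X' [hL' hB' hG' _].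
  pose g r := if r == j then i else r.
  have gj : forall r, g r != j by move=> r; rewrite /g; case: ifP => // /negbT.
  pose Y r := oapp X' 0 (unlift j (g r)).
  have hY : forall r, exists k, Y r = X' k /\ lift j k = g r.
    move=> r; have := gj r; rewrite eq_sym => /unlift_some [k e1 e2].
    by exists k; rewrite /Y e2.
  have adjg : forall a b, adj a b -> adj (g a) (g b).
    move=> a b; rewrite /g.
    case: (eqVneq a j) => [->|aj]; case: (eqVneq b j) => [->|bj] //.
    + by rewrite (negbTE (hirr j)).
    + move=> e; have bi : b != i by apply: contraTneq e => ->; rewrite hsym.
      by rewrite tw.
    + move=> e; have ai : a != i by apply: contraTneq e => ->.
      by rewrite htwin.
  have nadjg : forall a b, a != b -> ~~ adj a b -> g a != g b -> ~~ adj (g a) (g b).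
    move=> a b; rewrite /g.
    case: (eqVneq a j) => [->|aj]; case: (eqVneq b j) => [->|bj] //.
    + by move=> _ e bi; rewrite tw // eq_sym.
    + by move=> _ e ai; rewrite htwin.
  have hBY : berman_rel adj br' Y.
    split.
    + move=> a b e.
      case: (hY a) => ka [ya ea]; case: (hY b) => kb [yb eb]; rewrite ya yb.
      case: hB' => h1 _; apply: h1; rewrite /delete_vertex ea eb; exact: adjg.
    + move=> a b ab e.
      case: (hY a) => ka [ya ea]; case: (hY b) => kb [yb eb]; rewrite ya yb.
      case: (eqVneq (g a) (g b)) => [gab|gab].
        have -> : ka = kb by apply: (@lift_inj _ j); rewrite ea eb.
        by case: hL' => _ _ ->.
      case: hB' => _ h2; apply: h2.
        by apply: contra_neq gab => e'; rewrite -ea -eb e'.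
      by rewrite /delete_vertex ea eb; apply: nadjg.
  case: (hU L' br' Y hL' hBY) => f [hf fX].
  have fXl : forall k, f (X (lift j k)) = X' k.
    move=> k; rewrite fX /Y /g; case: eqP => [e|_]; last by rewrite liftK.
    by move: (neq_lift j k); rewrite e eqxx.
  exists f; split => //.
  + move=> y; apply: (hG' (fun y => exists x, f x = y)).
    * by exists 0; exact: hom0 hf.
    * move=> a x y' [x1 <-] [y1 <-]; exists (a *: x1 + y1); by case: hf => ->.
    * move=> x y' [x1 <-] [y1 <-]; exists (br x1 y1); by case: hf => _ ->.
    * by move=> a; exists (X (lift j a)).
  + move=> k ek. rewrite fX /Y /g eqxx -ek liftK //.
- move=> aij L' br' X' [hL' hB' hG' _].
  pose Z := br' (X' i) (X' j).
  pose Y r := if r == j then Z else X' r.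
  have hji : j != i by rewrite eq_sym.
  have adj' : forall r s, r != j -> s != j -> keep_only_edge adj i j r s = adj r s.
    by move=> r s rj sj; rewrite /keep_only_edge (negbTE rj) (negbTE sj).
  have hAB : br' (X' i) (br' (X' i) (X' j)) = - X' j.
    case: hB' => h1 _; apply: h1; by rewrite /keep_only_edge !eqxx (negbTE hij) /= aij ?orbT.
  have hBA : br' (X' j) (br' (X' j) (X' i)) = - X' i.
    case: hB' => h1 _; apply: h1; by rewrite /keep_only_edge !eqxx (negbTE hji) /= hsym aij ?orbT.
  have hBC : forall r, r != i -> r != j -> br' (X' j) (X' r) = 0.
    move=> r ri rj; case: hB' => _ h2; apply: h2; first by rewrite eq_sym.
    rewrite /keep_only_edge eqxx /= (negbTE hji) (negbTE rj) (negbTE ri).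
    by rewrite /= andbF.
  have hBY : berman_rel adj br' Y.
    split.
    + move=> a b e; rewrite /Y.
      case: (eqVneq a j) => [ea|aj]; case: (eqVneq b j) => [eb|bj].
      * by move: e; rewrite ea eb (negbTE (hirr j)).
      * case: (eqVneq b i) => [->|bi].
          rewrite /Z (brC hL' _ (X' i)) hAB opprK.
          by rewrite (brC hL' (br' (X' i) (X' j)) (X' j)) (brC hL' (X' i) (X' j)) (brNr hL') !opprK hBA.
        apply: (keyC hF hL' hAB hBA _ (hBC b bi bj)).
        case: hB' => h1 _; apply: h1; rewrite adj' //.
        by rewrite tw // -ea.
      * case: (eqVneq a i) => [->|ai].
          by rewrite /Z hAB (brNr hL').
        apply: (keyC2 hL' _ (hBC a ai aj)).
        case: hB' => h1 _; apply: h1; rewrite adj' //.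
        by rewrite htwin // -eb.
      * by case: hB' => h1 _; apply: h1; rewrite adj'.
    + move=> a b ab e; rewrite /Y.
      case: (eqVneq a j) => [ea|aj]; case: (eqVneq b j) => [eb|bj].
      * by move: ab; rewrite ea eb eqxx.
      * have bi : b != i by apply: contraTneq e => ->; rewrite ea hsym aij.
        apply: keyC3 => //; last exact: hBC.
        case: hB' => _ h2; apply: h2; first by rewrite eq_sym.
        by rewrite adj' // ?tw // -ea //; rewrite eq_sym.
      * have ai : a != i by apply: contraTneq e => ->; rewrite eb aij.
        rewrite (brC hL') keyC3 ?oppr0 //; last exact: hBC.
        case: hB' => _ h2; apply: h2; first by rewrite eq_sym.
        by rewrite adj' // hsym htwin // -eb.
      * by case: hB' => _ h2; apply: h2; rewrite ?adj'.
  case: (hU L' br' Y hL' hBY) => f [hf fX].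
  exists f; split => //.
  + move=> y; apply: (hG' (fun y => exists x, f x = y)).
    * by exists 0; exact: hom0 hf.
    * move=> a x y' [x1 <-] [y1 <-]; exists (a *: x1 + y1); by case: hf => ->.
    * move=> x y' [x1 <-] [y1 <-]; exists (br x1 y1); by case: hf => _ ->.
    * move=> a; case: (eqVneq a j) => [->|aj]; last first.
        by exists (X a); rewrite fX /Y (negbTE aj).
      exists ((-1) *: br (X i) (X j) + 0).
      case: hf => hl hb.
      rewrite hl hb !fX /Y eqxx (negbTE hij) (hom0 (conj hl hb)) addr0.
      by rewrite /Z hAB scaleN1r opprK.
  + by move=> r rj; rewrite fX /Y (negbTE rj).
  + by rewrite fX /Y eqxx.
Qed.
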